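(* Let $p\in(0,1)$ and let $\mu\ge1$ be an integer. Let $X_1,X_2,\dots$ be i.i.d. Bernoulli random variables with $\Pr[X_t=1]=p$. Define sets $M,N\subseteq\mathbb{N}$ by the following process: starting from $t=1$, put $t$ into $M$ if $X_t=1$ and into $N$ if $X_t=0$; the process terminates immediately after $|M|=\mu$. For each $t\ge1$ let $w_t=w_t(X_1,\dots,X_{t-1})\ge0$ be a non-negative function of the first $t-1$ variables ($w_1$ a constant), with $w_t=0$ whenever the process terminated before time $t$, and for $T\subseteq\mathbb{N}$ set $w(T)=\sum_{t\in T}w_t(X_1,\dots,X_{t-1})$. Then $$\mathbb{E}[w(M)]=\frac{p}{1-p}\,\mathbb{E}[w(N)].$$ *)

(* Defs.v *)
From mathcomp Require Import all_boot all_order all_algebra.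
From mathcomp Require Import all_classical all_reals all_analysis.
Set Implicit Arguments. Unset Strict Implicit. Unset Printing Implicit Defensive.
Import Order.TTheory GRing.Theory Num.Theory.
Local Open Scope classical_set_scope.
Local Open Scope ring_scope.
Local Open Scope ereal_scope.

Definition hist (T : Type) (X : nat -> T -> bool) (t : nat) (x : T) : seq bool :=
  [seq X i x | i <- iota 1 t.-1].

(* M: times t >= 1 with X_t = 1 at which the process has not yet terminated
   (fewer than mu ones among X_1..X_{t-1}). *)
Definition setM (T : Type) (mu : nat) (X : nat -> T -> bool) (x : T) : set nat :=
  [set t | (1 <= t)%N /\ X t x = true /\ (count id (hist X t x) < mu)%N].

Definition setN (T : Type) (mu : nat) (X : nat -> T -> bool) (x : T) : set nat :=
  [set t | (1 <= t)%N /\ X t x = false /\ (count id (hist X t x) < mu)%N].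

Definition wsum (R : realType) (T : Type) (w : nat -> seq bool -> R)
  (X : nat -> T -> bool) (x : T) (A : set nat) : \bar R :=
  \esum_(t in A) (w t (hist X t x))%:E.

Definition iid_bernoulli (R : realType) (d : measure_display) (T : measurableType d)
  (P : probability T R) (X : nat -> T -> bool) (p : R) : Prop :=
  (forall t, (1 <= t)%N -> measurable [set x | X t x = true]) /\
  (forall (S : seq nat) (b : nat -> bool), uniq S -> all (fun t => 1 <= t)%N S ->
     P (\big[setI/setT]_(t <- S) [set x | X t x = b t]) =
     (\prod_(t <- S) (if b t then p else 1 - p)%R)%:E).

(* Main.v *)
Require Import Defs.
From mathcomp Require Import all_boot all_order all_algebra.
From mathcomp Require Import all_classical all_reals all_analysis.
From mathcomp Require Import measurable_realfun.
Import Order.TTheory GRing.Theory Num.Theory.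
Set Implicit Arguments. Unset Strict Implicit. Unset Printing Implicit Defensive.
Local Open Scope classical_set_scope.
Local Open Scope ring_scope.
Local Open Scope ereal_scope.

Lemma bigI_mem (T : Type) (X : nat -> T -> bool) (f : nat -> bool) (S : seq nat) x :
  (\big[setI/setT]_(i <- S) [set y | X i y = f i]) x <-> all (fun i => X i x == f i) S.
Proof.
elim: S => [|i S IH]; first by rewrite big_nil.
rewrite big_cons /=; split.
  by move=> [-> /IH ->]; rewrite eqxx.
by move=> /andP[/eqP -> /IH].
Qed.

Lemma bigI_meas d (T : measurableType d) (X : nat -> T -> bool) (f : nat -> bool) (S : seq nat) :
  (forall i, i \in S -> measurable [set y | X i y = true]) ->
  measurable (\big[setI/setT]_(i <- S) [set y | X i y = f i]).
Proof.
elim: S => [|i S IH] H; first by rewrite big_nil.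
rewrite big_cons; apply: measurableI; last by apply: IH => j jS; apply: H; rewrite inE jS orbT.
have mi := H i (mem_head _ _).
case: (f i); first by [].
rewrite (_ : [set y | X i y = false] = ~` [set y | X i y = true]); first exact: measurableC.
by apply/seteqP; split => y /=; case: (X i y).
Qed.

Lemma hist_eq (T : Type) (X : nat -> T -> bool) n (s : seq bool) x :
  size s = n ->
  (hist X n.+1 x = s <-> all (fun i => X i x == nth false s i.-1) (iota 1 n)).
Proof.
move=> sz.
have Es : s = map (fun i => nth false s i.-1) (iota 1 n).
  rewrite -{1}(mkseq_nth false s) sz /mkseq -add1n iotaDl -map_comp.
  by apply: eq_map => i /=.
rewrite /hist /=; split.
  move=> H; apply/allP => i iS; apply/eqP.
  have H2 : [seq X i x | i <- iota 1 n] = map (fun i => nth false s i.-1) (iota 1 n).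
    by rewrite -Es.
  by move/eq_in_map: H2 => /(_ i iS).
move=> /allP H; rewrite [RHS]Es; apply/eq_in_map => i iS; exact/eqP/H.
Qed.

Definition bb n (s : seq bool) (b : bool) i := if i == n.+1 then b else nth false s i.-1.
Definition Bset (T : Type) (X : nat -> T -> bool) n s b :=
  \big[setI/setT]_(i <- iota 1 n.+1) [set y | X i y = bb n s b i].
Definition Aset (T : Type) (X : nat -> T -> bool) n s :=
  \big[setI/setT]_(i <- iota 1 n) [set y | X i y = bb n s false i].

Lemma iotaSr n : iota 1 n.+1 = rcons (iota 1 n) n.+1.
Proof. by rewrite -cats1 -[in LHS](addn1 n) iotaD add1n. Qed.

Lemma all_bb (T : Type) (X : nat -> T -> bool) n s b x :
  all (fun i => X i x == bb n s b i) (iota 1 n) =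
  all (fun i => X i x == nth false s i.-1) (iota 1 n).
Proof.
apply: eq_in_all => i; rewrite mem_iota => /andP[_ H].
by rewrite /bb (_ : (i == n.+1) = false) //; apply/negbTE; rewrite neq_ltn -(add1n n) H.
Qed.

Lemma Bset_mem (T : Type) (X : nat -> T -> bool) n s b x : size s = n ->
  Bset X n s b x <-> hist X n.+1 x = s /\ X n.+1 x = b.
Proof.
move=> sz; rewrite /Bset bigI_mem iotaSr all_rcons (hist_eq _ _ sz) all_bb.
rewrite /bb eqxx; split.
  by move=> /andP[/eqP -> ->].
by move=> [-> ->]; rewrite eqxx.
Qed.

Lemma Aset_mem (T : Type) (X : nat -> T -> bool) n s x : size s = n ->
  Aset X n s x <-> hist X n.+1 x = s.
Proof.
by move=> sz; rewrite /Aset bigI_mem (hist_eq _ _ sz) all_bb.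
Qed.

Lemma size_hist (T : Type) (X : nat -> T -> bool) t x : size (hist X t x) = t.-1.
Proof. by rewrite /hist size_map size_iota. Qed.

Lemma decomp (R : realType) (T : Type) (X : nat -> T -> bool) (w : nat -> seq bool -> R) n b x :
  ((if X n.+1 x == b then w n.+1 (hist X n.+1 x) else 0)%R)%:E =
  \sum_(s : n.-tuple bool) (w n.+1 s * \1_(Bset X n s b) x)%:E.
Proof.
rewrite sumEFin; congr EFin.
pose s0 : n.-tuple bool := @Tuple n bool (hist X n.+1 x) (introT eqP (size_hist X n.+1 x)).
rewrite (bigD1 s0) //= big1 ?addr0; last first.
  move=> s ns; rewrite indicE.
  case: (boolP (x \in Bset X n s b)); last by rewrite mulr0.
  rewrite inE => /(Bset_mem _ _ _ (size_tuple s)) [H _].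
  by case/eqP: ns; apply: val_inj; rewrite /= H.
rewrite indicE.
case: (boolP (x \in Bset X n s0 b)).
  by rewrite inE => /(Bset_mem _ _ _ (size_tuple s0)) [_ ->]; rewrite eqxx mulr1.
move=> H; rewrite mulr0; case: eqP => // E; case/negP: H; rewrite inE.
by apply/(Bset_mem _ _ _ (size_tuple s0)).
Qed.

Definition qq (R : realType) (p : R) (c : bool) : R := if c then p else (1 - p)%R.

Lemma Bset_meas d (T : measurableType d) (X : nat -> T -> bool) n s b :
  (forall t, (1 <= t)%N -> measurable [set x | X t x = true]) ->
  measurable (Bset X n s b).
Proof.
move=> H; apply: bigI_meas => i; rewrite mem_iota => /andP[+ _]; exact: H.
Qed.

Lemma Bset_prob (R : realType) d (T : measurableType d) (P : probability T R)
  (X : nat -> T -> bool) (p : R) n s b :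
  iid_bernoulli P X p ->
  P (Bset X n s b) = ((\prod_(i <- iota 1 n) qq p (nth false s i.-1)) * qq p b)%:E.
Proof.
move=> [_ H]; rewrite /Bset H ?iota_uniq //; last first.
  by apply/allP => i; rewrite mem_iota => /andP[].
rewrite iotaSr big_rcons /= {2}/bb eqxx; congr (_ * _)%:E.
apply: eq_big_seq => i; rewrite mem_iota => /andP[_ Hi].
by rewrite /bb (_ : (i == n.+1) = false) //; apply/negbTE; rewrite neq_ltn -(add1n n) Hi.
Qed.

Lemma int_decomp (R : realType) d (T : measurableType d) (P : probability T R)
  (X : nat -> T -> bool) (p : R) (w : nat -> seq bool -> R) n b :
  iid_bernoulli P X p ->
  (forall t s, (1 <= t)%N -> size s = t.-1 -> (0 <= w t s)%R) ->
  \int[P]_x (((if X n.+1 x == b then w n.+1 (hist X n.+1 x) else 0)%R)%:E) =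
  (qq p b)%:E * \sum_(s : n.-tuple bool) (w n.+1 s * \prod_(i <- iota 1 n) qq p (nth false s i.-1))%:E.
Proof.
move=> iid w0.
have mB s : measurable (Bset X n s b) by apply: Bset_meas; case: iid.
under eq_integral do rewrite decomp.
rewrite ge0_integral_sum //; last 2 first.
- move=> s; apply/measurable_EFinP; apply: measurable_funM; first exact: measurable_cst.
  exact: measurable_indic.
- move=> s x _; rewrite lee_fin; apply: mulr_ge0; first by apply: w0; rewrite ?size_tuple.
  by rewrite indicE.
rewrite (eq_bigr (fun s : n.-tuple bool =>
     (w n.+1 s * ((\prod_(i <- iota 1 n) qq p (nth false s i.-1)) * qq p b))%:E)); last first.
  move=> s _; under eq_integral do rewrite EFinM.
  rewrite ge0_integralZl_EFin //; try (by move=> x _; rewrite lee_fin indicE);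
    try (by apply/measurable_EFinP; exact: measurable_indic);
    try (by apply: w0; rewrite ?size_tuple).
  rewrite integral_indic // setIT EFinM; congr (_ * _); exact: (Bset_prob n s b iid).
rewrite sumEFin sumEFin -EFinM; congr EFin; rewrite big_distrr /=.
by apply: eq_bigr => s _; rewrite mulrA mulrC.
Qed.

Definition F (R : realType) (T : Type) (X : nat -> T -> bool) (w : nat -> seq bool -> R)
  (b : bool) (t : nat) (x : T) : \bar R :=
  if t is n.+1 then ((if X n.+1 x == b then w n.+1 (hist X n.+1 x) else 0)%R)%:E else 0.

Definition cc (R : realType) (p : R) (w : nat -> seq bool -> R) (t : nat) : \bar R :=
  if t is n.+1 then
    \sum_(s : n.-tuple bool) (w n.+1 s * \prod_(i <- iota 1 n) qq p (nth false s i.-1))%:E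
  else 0.

Lemma F_meas d (T : measurableType d) (R : realType) (X : nat -> T -> bool)
  (w : nat -> seq bool -> R) b t :
  (forall t, (1 <= t)%N -> measurable [set x | X t x = true]) ->
  measurable_fun setT (F X w b t).
Proof.
move=> mX; case: t => [|n]; first exact: measurable_cst.
rewrite (_ : F X w b n.+1 = fun x => \sum_(s : n.-tuple bool) (w n.+1 s * \1_(Bset X n s b) x)%:E).
  apply: emeasurable_sum => s; apply/measurable_EFinP; apply: measurable_funM.
    exact: measurable_cst.
  by apply: measurable_indic; apply: Bset_meas.
by apply/funext => x; rewrite /F decomp.
Qed.

Lemma F_ge0 (T : Type) (R : realType) (X : nat -> T -> bool)
  (w : nat -> seq bool -> R) b t x :
  (forall t s, (1 <= t)%N -> size s = t.-1 -> (0 <= w t s)%R) ->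
  0 <= F X w b t x.
Proof.
move=> w0; case: t => [|n] //=; rewrite lee_fin; case: eqP => // _.
by apply: w0; rewrite ?size_hist.
Qed.

Lemma intF (R : realType) d (T : measurableType d) (P : probability T R)
  (X : nat -> T -> bool) (p : R) (w : nat -> seq bool -> R) b t :
  iid_bernoulli P X p ->
  (forall t s, (1 <= t)%N -> size s = t.-1 -> (0 <= w t s)%R) ->
  \int[P]_x F X w b t x = (qq p b)%:E * cc p w t.
Proof.
move=> iid w0; case: t => [|n]; first by rewrite /= integral0 mule0.
exact: int_decomp.
Qed.

Lemma cc_ge0 (R : realType) (p : R) (w : nat -> seq bool -> R) t :
  (0 <= p <= 1)%R ->
  (forall t s, (1 <= t)%N -> size s = t.-1 -> (0 <= w t s)%R) ->
  0 <= cc p w t.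
Proof.
move=> /andP[p0 p1] w0; case: t => [|n] //=; apply: sume_ge0 => s _; rewrite lee_fin.
apply: mulr_ge0; first by apply: w0; rewrite ?size_tuple.
apply: prodr_ge0 => i _; rewrite /qq; case: ifP => _ //; by rewrite subr_ge0.
Qed.

Lemma wsum_series (R : realType) (T : Type) (mu : nat) (X : nat -> T -> bool)
  (w : nat -> seq bool -> R) b x :
  (forall t s, (1 <= t)%N -> size s = t.-1 -> (0 <= w t s)%R) ->
  (forall t s, (1 <= t)%N -> size s = t.-1 -> (mu <= count id s)%N -> w t s = 0%R) ->
  wsum w X x [set t | (1 <= t)%N /\ X t x = b /\ (count id (hist X t x) < mu)%N] =
  \sum_(t <oo) F X w b t x.
Proof.
move=> w0 wmu; rewrite /wsum esum_mkcond -nneseries_esumT; last first.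
  move=> t; case: ifP => // /[!inE] -[t1 _]; rewrite lee_fin.
  by apply: w0; rewrite ?size_hist.
apply: eq_eseriesr => t _; case: ifPn => [/[!inE] -[t1 [Xt cnt]]|].
  by case: t t1 Xt cnt => [|n] //= _ ->; rewrite eqxx.
rewrite notin_setE /= => H; case: t H => [|n] H //=; case: eqP => // Xb.
have [cnt|cnt] := ltnP (count id (hist X n.+1 x)) mu.
  by case: H.
by rewrite (wmu n.+1 _ _ (size_hist _ _ _) cnt).
Qed.

Theorem proposition1 (R : realType) (d : measure_display) (T : measurableType d)
  (P : probability T R) (p : R) (mu : nat) (X : nat -> T -> bool)
  (w : nat -> seq bool -> R) :
  (0 < p < 1)%R -> (1 <= mu)%N -> iid_bernoulli P X p ->
  (forall t s, (1 <= t)%N -> size s = t.-1 -> (0 <= w t s)%R) ->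
  (forall t s, (1 <= t)%N -> size s = t.-1 -> (mu <= count id s)%N -> w t s = 0%R) ->
  \int[P]_x wsum w X x (setM mu X x) =
    (p / (1 - p))%:E * \int[P]_x wsum w X x (setN mu X x).
Proof.
move=> /andP[p0 p1] _ iid w0 wmu.
have mX := iid.1.
have key b : \int[P]_x wsum w X x [set t | (1 <= t)%N /\ X t x = b /\ (count id (hist X t x) < mu)%N]
    = (qq p b)%:E * \sum_(t <oo) cc p w t.
  under eq_integral do rewrite (wsum_series _ _ _ w0 wmu).
  rewrite integral_nneseries //; last 2 first.
  - by move=> t; apply: F_meas.
  - by move=> t x _; apply: F_ge0.
  rewrite -nneseriesZl; last first.
    by move=> t _; apply: cc_ge0 => //; rewrite (ltW p0) (ltW p1).
  by apply: eq_eseriesr => t _; apply: intF.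
rewrite /setM /setN (key true) (key false) /qq muleA -EFinM divfK //.
by rewrite subr_eq0 eq_sym lt_eqF.
Qed.
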